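(* Let $Z\subset\mathbb{R}^d$ be a zonotope with $v$ vertices and let $\mathcal{H}_Z$ denote the family of all homothets of $Z$. Then for every finite set $S\subset\mathbb{R}^d$ and every $\epsilon>0$ there is a set $W\subset\mathbb{R}^d$ with $|W|\le v/\epsilon$ such that $W\cap Z'\neq\emptyset$ for every $Z'\in\mathcal{H}_Z$ with $|Z'\cap S|\ge\epsilon|S|$.
   Context: A zonotope is a centrally symmetric convex polytope all of whose faces are centrally symmetric. A homothet of $Z$ is $\lambda Z+x$ with $\lambda>0$, $x\in\mathbb{R}^d$. *)

(* Defs.v *)
From HB Require Import structures.
From mathcomp Require Import all_boot all_order all_algebra.
From mathcomp Require Import boolp classical_sets reals.
Set Implicit Arguments. Unset Strict Implicit. Unset Printing Implicit Defensive.
Import Order.TTheory GRing.Theory Num.Theory.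
Local Open Scope ring_scope.
Local Open Scope classical_set_scope.

Definition dotv (R : realType) (d : nat) (u x : 'rV[R]_d) : R :=
  \sum_(i < d) u ord0 i * x ord0 i.

Definition conv_hull (R : realType) (d : nat) (p : seq 'rV[R]_d) : set 'rV[R]_d :=
  [set x | exists w : 'I_(size p) -> R,
     (forall i, 0 <= w i) /\ \sum_(i < size p) w i = 1 /\
     x = \sum_(i < size p) w i *: p`_i].

Definition is_polytope (R : realType) (d : nat) (P : set 'rV[R]_d) : Prop :=
  exists p : seq 'rV[R]_d, p != [::] /\ P = conv_hull p.

Definition centrally_symmetric (R : realType) (d : nat) (A : set 'rV[R]_d) : Prop :=
  exists c : 'rV[R]_d, forall x, A x <-> A (2%:R *: c - x).

(* (Nonempty) faces of a polytope P: intersections of P with a supporting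
   hyperplane {x | <u,x> = max_P <u,.>}; u = 0 gives P itself. *)
Definition is_face (R : realType) (d : nat) (P F : set 'rV[R]_d) : Prop :=
  exists u : 'rV[R]_d, F = [set x | P x /\ forall y, P y -> dotv u y <= dotv u x].

Definition is_vertex (R : realType) (d : nat) (P : set 'rV[R]_d) (x : 'rV[R]_d) : Prop :=
  is_face P [set x].

Definition is_zonotope (R : realType) (d : nat) (Z : set 'rV[R]_d) : Prop :=
  [/\ is_polytope Z, centrally_symmetric Z &
      forall F, is_face Z F -> centrally_symmetric F].

Definition homothet (R : realType) (d : nat) (Z : set 'rV[R]_d) (lam : R) (x : 'rV[R]_d)
  : set 'rV[R]_d := [set lam *: z + x | z in Z].

(* Main.v *)
Require Import Defs.
From HB Require Import structures.
From mathcomp Require Import all_boot all_order all_algebra.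
From mathcomp Require Import boolp classical_sets reals topology normedtype.
From mathcomp Require Import ring lra.
Import Order.TTheory GRing.Theory Num.Theory.
Import numFieldTopology.Exports numFieldNormedType.Exports.
Local Open Scope ring_scope.
Local Open Scope classical_set_scope.
Set Implicit Arguments. Unset Strict Implicit. Unset Printing Implicit Defensive.

Section Lin.
Variable R : realType.

Section D.
Variable n : nat.
Implicit Types u v x y : 'rV[R]_n.

Lemma dotvDr u x y : dotv u (x + y) = dotv u x + dotv u y.
Proof. by rewrite /dotv -big_split; apply: eq_bigr => i _; rewrite mxE mulrDr. Qed.
Lemma dotvZr u k x : dotv u (k *: x) = k * dotv u x.
Proof. by rewrite /dotv mulr_sumr; apply: eq_bigr => i _; rewrite mxE mulrCA. Qed.
Lemma dotvNr u x : dotv u (- x) = - dotv u x.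
Proof. by rewrite -scaleN1r dotvZr mulN1r. Qed.
Lemma dotvBr u x y : dotv u (x - y) = dotv u x - dotv u y.
Proof. by rewrite dotvDr dotvNr. Qed.
Lemma dotv0r u : dotv u 0 = 0.
Proof. by rewrite /dotv big1 // => i _; rewrite mxE mulr0. Qed.
Lemma dotvC u x : dotv u x = dotv x u.
Proof. by apply: eq_bigr => i _; rewrite mulrC. Qed.
Lemma dotvDl u v x : dotv (u + v) x = dotv u x + dotv v x.
Proof. by rewrite dotvC dotvDr !(dotvC x). Qed.
Lemma dotvZl k u x : dotv (k *: u) x = k * dotv u x.
Proof. by rewrite dotvC dotvZr dotvC. Qed.
Lemma dotvNl u x : dotv (- u) x = - dotv u x.
Proof. by rewrite dotvC dotvNr dotvC. Qed.
Lemma dotvBl u v x : dotv (u - v) x = dotv u x - dotv v x.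
Proof. by rewrite dotvDl dotvNl. Qed.
Lemma dotv0l x : dotv 0 x = 0.
Proof. by rewrite dotvC dotv0r. Qed.
Lemma dotv_sumr u m (F : 'I_m -> 'rV[R]_n) :
  dotv u (\sum_(i < m) F i) = \sum_(i < m) dotv u (F i).
Proof.
rewrite /dotv exchange_big; apply: eq_bigr => j _.
by rewrite summxE mulr_sumr.
Qed.
Lemma dotv_ge0 x : 0 <= dotv x x.
Proof. by apply: sumr_ge0 => i _; rewrite -expr2 sqr_ge0. Qed.
Lemma dotv_eq0 x : dotv x x = 0 -> x = 0.
Proof.
move=> /eqP; rewrite psumr_eq0 => [/allP H|i _]; last by rewrite -expr2 sqr_ge0.
apply/rowP => i; rewrite [RHS]mxE.
by apply/eqP; rewrite -sqrf_eq0 expr2; have := H i (mem_index_enum _).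
Qed.

Fixpoint lc (l : seq R) (A : seq 'rV[R]_n) : 'rV_n :=
  match l, A with a :: l', v :: A' => a *: v + lc l' A' | _, _ => 0 end.

Definition incone (A : seq 'rV[R]_n) b :=
  exists l, size l = size A /\ all (fun a => 0 <= a) l /\ b = lc l A.

Lemma lc_mapf (al : R) u a l (A : seq 'rV[R]_n) :
  lc l (map (fun v => al *: v - dotv u v *: a) A) = al *: lc l A - dotv u (lc l A) *: a.
Proof.
elim: l A => [|x l IH] [|v A] /=; rewrite ?dotv0r ?scaler0 ?scale0r ?subr0 //.
rewrite IH dotvDr dotvZr.
by apply/rowP => i; rewrite !mxE; ring.
Qed.

Lemma dotv_lc_le0 u l (A : seq 'rV[R]_n) :
  all (fun a => 0 <= a) l -> (forall v, v \in A -> dotv u v <= 0) ->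
  dotv u (lc l A) <= 0.
Proof.
elim: l A => [|x l IH] [|v A] /=; rewrite ?dotv0r // => /andP[x0 l0] HA.
rewrite dotvDr dotvZr.
have h1 := HA v (mem_head _ _).
have h2 : dotv u (lc l A) <= 0.
  by apply: IH => // w wA; apply: HA; rewrite in_cons wA orbT.
nra.
Qed.

Lemma farkas (A : seq 'rV[R]_n) b : incone A b \/
  exists u, (forall v, v \in A -> dotv u v <= 0) /\ 0 < dotv u b.
Proof.
move: {2}(size A) (erefl (size A)) => k; elim: k A b => [|k IH] [|a A] b //=.
- move=> _; have [->|b0] := eqVneq b 0; first by left; exists [::].
  right; exists b; split => //; rewrite lt_neqAle dotv_ge0 andbT eq_sym.
  by apply/eqP => /dotv_eq0; apply/eqP.
- case=> sA; case: (IH A b sA) => [[l [sl [l0 ->]]]|[u [Hu ub]]].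
    by left; exists (0 :: l); rewrite /= sl l0 lexx scale0r add0r.
  have [ua|ua] := lerP (dotv u a) 0.
    right; exists u; split => // v; rewrite in_cons => /orP[/eqP->//|]; exact: Hu.
  pose al := dotv u a.
  pose A1 := map (fun v => al *: v - dotv u v *: a) A.
  pose b1 := al *: b - dotv u b *: a.
  have sA1 : size A1 = k by rewrite size_map.
  case: (IH A1 b1 sA1) => [[l [sl [l0 eb]]]|[u' [Hu' ub']]].
    left; pose L := lc l A.
    have uL : dotv u L <= 0 by apply: dotv_lc_le0.
    exists (((dotv u b - dotv u L) / al) :: l); split; first by rewrite /= sl size_map.
    split; first by rewrite /= l0 andbT divr_ge0 // ?subr_ge0 ?(ltW ua) //; lra.
    move: eb; rewrite /b1 /A1 lc_mapf -/L => eb.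
    rewrite /=; apply/rowP => i; rewrite !mxE.
    have h := congr1 (fun M : 'rV_n => M 0 i) eb; move: h; rewrite /= !mxE.
    move: (dotv u b) (dotv u L) (b 0 i) (a 0 i) (lc l A 0 i) => x y z w t h.
    have al0 : al != 0 by rewrite /al gt_eqF.
    have -> : z = al^-1 * (al * z) by field.
    have -> : al * z = al * t - y * w + x * w by rewrite -h; ring.
    by field.
  right; exists (al *: u' - dotv u' a *: u); split.
    move=> v; rewrite in_cons => /orP[/eqP->|vA].
      by rewrite dotvBl !dotvZl /al mulrC subrr.
    have := Hu' (al *: v - dotv u v *: a) (map_f _ vA).
    by rewrite dotvBl !dotvZl dotvBr !dotvZr; lra.
  move: ub'; rewrite /b1 dotvBl !dotvZl dotvBr !dotvZr; lra.
Qed.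

Lemma lc_sum l (A : seq 'rV[R]_n) : size l = size A ->
  lc l A = \sum_(i < size A) l`_i *: A`_i.
Proof.
elim: l A => [|x l IH] [|v A] //=; first by rewrite big_ord0.
by case=> sl; rewrite big_ord_recl /= IH.
Qed.

Lemma lc_scale k l (A : seq 'rV[R]_n) : lc (map (fun a : R => k * a) l) A = k *: lc l A.
Proof.
elim: l A => [|x l IH] [|v A] //=; rewrite ?scaler0 //.
by rewrite IH scalerDr scalerA.
Qed.

Lemma lc_zero l (A : seq 'rV[R]_n) : all (fun a => 0 <= a) l ->
  \sum_(a <- l) a = 0 -> lc l A = 0.
Proof.
elim: l A => [|x l IH] [|v A] //= /andP[x0 l0]; rewrite big_cons => s0.
have sl0 : 0 <= \sum_(y <- l) y by rewrite big_seq_cond; apply: sumr_ge0 => y /andP[/(allP l0)].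
have x00 : x = 0 by lra.
by rewrite x00 scale0r add0r IH //; lra.
Qed.

Lemma lc_subconst l (A : seq 'rV[R]_n) y : size l = size A ->
  lc l (map (fun q => q - y) A) = lc l A - (\sum_(a <- l) a) *: y.
Proof.
elim: l A => [|x l IH] [|v A] //=; first by rewrite big_nil scale0r subr0.
case=> sl; rewrite IH // big_cons.
by apply/rowP => i; rewrite !mxE; ring.
Qed.

End D.

Lemma dotv_rowmx n1 n2 (u1 v1 : 'rV[R]_n1) (u2 v2 : 'rV[R]_n2) :
  dotv (row_mx u1 u2) (row_mx v1 v2) = dotv u1 v1 + dotv u2 v2.
Proof.
rewrite /dotv big_split_ord /=; congr (_ + _); apply: eq_bigr => i _.
  by rewrite !row_mxEl.
by rewrite !row_mxEr.
Qed.

Lemma dotv_c1 (s : 'rV[R]_1) : dotv s (const_mx 1) = s 0 0.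
Proof. by rewrite /dotv big_ord1 mxE mulr1. Qed.

Section Conv.
Variables (d : nat) (p : seq 'rV[R]_d).
Local Notation Z := (conv_hull p).
Local Notation N := (size p).

Lemma wdot (c : 'I_N -> R) v :
  dotv v (\sum_(i < N) c i *: p`_i) = \sum_(i < N) c i * dotv v p`_i.
Proof. by rewrite dotv_sumr; apply: eq_bigr => i _; rewrite dotvZr. Qed.

Lemma supp_le (c : 'I_N -> R) v M : (forall i, 0 <= c i) -> \sum_i c i = 1 ->
  (forall i, 0 < c i -> dotv v p`_i <= M) ->
  dotv v (\sum_(i < N) c i *: p`_i) <= M.
Proof.
move=> c0 c1 H; rewrite wdot.
have -> : M = \sum_(i < N) c i * M by rewrite -mulr_suml c1 mul1r.
apply: ler_sum => i _; have := c0 i; rewrite le_eqVlt => /orP[/eqP<-|ci].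
  by rewrite !mul0r.
by rewrite ler_wpM2l ?(ltW ci) ?H.
Qed.

Lemma supp_ge (c : 'I_N -> R) v M : (forall i, 0 <= c i) -> \sum_i c i = 1 ->
  (forall i, 0 < c i -> M <= dotv v p`_i) ->
  M <= dotv v (\sum_(i < N) c i *: p`_i).
Proof.
move=> c0 c1 H; rewrite -[M]opprK -[X in _ <= X]opprK lerN2 -dotvNl.
apply: supp_le => // i /H; rewrite dotvNl; lra.
Qed.

Lemma conv_pt (i : 'I_N) : Z p`_i.
Proof.
exists (fun j => (j == i)%:R); split; first by move=> j; case: (j == i).
split; first by rewrite (bigD1 i) //= eqxx big1 ?addr0 // => j /negbTE ->.
rewrite (bigD1 i) //= eqxx scale1r big1 ?addr0 // => j /negbTE ->.
by rewrite scale0r.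
Qed.

Lemma conv_le x v M : Z x -> (forall i : 'I_N, dotv v p`_i <= M) -> dotv v x <= M.
Proof. by move=> [c [c0 [c1 ->]]] H; apply: supp_le. Qed.

Lemma conv_convex x y t : Z x -> Z y -> 0 <= t <= 1 -> Z (t *: x + (1 - t) *: y).
Proof.
move=> [cx [cx0 [cx1 ->]]] [cy [cy0 [cy1 ->]]] /andP[t0 t1].
exists (fun i => t * cx i + (1 - t) * cy i); split.
  by move=> i; apply: addr_ge0; apply: mulr_ge0 => //; rewrite subr_ge0.
split; first by rewrite big_split /= -!mulr_sumr cx1 cy1; ring.
rewrite !scaler_sumr -big_split /=; apply: eq_bigr => i _.
by apply/rowP => j; rewrite !mxE; ring.
Qed.

Lemma conv_lc l : size l = N -> all (fun a => 0 <= a) l -> \sum_(a <- l) a = 1 ->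
  Z (lc l p).
Proof.
move=> sl l0 l1; exists (fun i : 'I_N => l`_i); split.
  by move=> i; apply: (allP l0); apply: mem_nth; rewrite sl.
split; last by rewrite lc_sum.
by rewrite -l1 (big_nth 0) big_mkord sl.
Qed.

Lemma lc_rowmx l : size l = N ->
  lc l (map (fun q => row_mx q (const_mx 1 : 'rV[R]_1)) p) =
  row_mx (lc l p) (const_mx (\sum_(a <- l) a)).
Proof.
elim: l p => [|x l IH] [|v A] //=.
  move=> _; rewrite big_nil; apply/rowP => i; rewrite !mxE.
  by case: splitP => ? ?; rewrite mxE.
case=> sl; rewrite IH // big_cons.
apply/rowP => i; rewrite !mxE; case: splitP => j _; rewrite !mxE //.
by rewrite mulr1.
Qed.

Lemma conv_sep z : ~ Z z ->
  exists w M, (forall i : 'I_N, dotv w p`_i <= M) /\ M < dotv w z.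
Proof.
move=> nz.
case: (farkas (map (fun q => row_mx q (const_mx 1 : 'rV[R]_1)) p)
               (row_mx z (const_mx 1))) => [[l [sl [l0 e]]]|[u [Hu ub]]].
  rewrite size_map in sl; rewrite lc_rowmx // in e.
  case/eq_row_mx: e => ez e1; exfalso; apply: nz; rewrite ez.
  apply: conv_lc => //; have := congr1 (fun M : 'rV_1 => M 0 0) e1.
  by rewrite !mxE => ->.
rewrite -(hsubmxK u) in Hu ub.
exists (lsubmx u), (- rsubmx u 0 0); split.
  move=> i; have := Hu _ (map_f _ (mem_nth 0 (ltn_ord i))).
  rewrite dotv_rowmx dotv_c1; lra.
by move: ub; rewrite dotv_rowmx dotv_c1; lra.
Qed.


Definition face (u : 'rV[R]_d) : set 'rV[R]_d :=
  [set x | Z x /\ forall y, Z y -> dotv u y <= dotv u x].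

Lemma faceP u x : face u x <-> Z x /\ forall i : 'I_N, dotv u p`_i <= dotv u x.
Proof.
split.
- by move=> [zx H]; split => // i; apply: H; exact: conv_pt.
- by move=> [zx H]; split => // y zy; exact: (conv_le zy H).
Qed.

Lemma face_supp u (c : 'I_N -> R) : (forall i, 0 <= c i) -> \sum_i c i = 1 ->
  face u (\sum_(i < N) c i *: p`_i) -> forall i, 0 < c i -> face u p`_i.
Proof.
move=> c0 c1 /faceP[_ H] i ci; apply/faceP; split; first exact: conv_pt.
move=> j; apply: le_trans (H j) _.
have e : \sum_(j < N) c j * (dotv u (\sum_(k < N) c k *: p`_k) - dotv u p`_j) = 0.
  under eq_bigr do rewrite mulrBr.
  by rewrite sumrB -mulr_suml c1 mul1r -wdot subrr.
move: e; move/eqP; rewrite psumr_eq0; last first.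
  by move=> k _; apply: mulr_ge0 => //; rewrite subr_ge0.
move/allP/(_ i (mem_index_enum _))/implyP/(_ isT); rewrite mulf_eq0 => /orP[/eqP ci0|].
  by move: ci; rewrite ci0 ltxx.
by rewrite subr_eq0 => /eqP->.
Qed.

Lemma face_of_supp u (c : 'I_N -> R) : (forall i, 0 <= c i) -> \sum_i c i = 1 ->
  (forall i, 0 < c i -> face u p`_i) -> face u (\sum_(i < N) c i *: p`_i).
Proof.
move=> c0 c1 H; apply/faceP; split; first by exists c.
move=> j; apply: supp_ge => // i /H /faceP[_]; exact.
Qed.

Lemma face_convex u x y t : face u x -> face u y -> 0 <= t <= 1 ->
  face u (t *: x + (1 - t) *: y).
Proof.
move=> /faceP[zx Hx] /faceP[zy Hy] /andP[t0 t1]; apply/faceP; split.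
  by apply: conv_convex => //; rewrite t0.
move=> i; rewrite dotvDr !dotvZr; have := Hx i; have := Hy i; nra.
Qed.

Lemma face_sub u x : face u x -> Z x.
Proof. by case. Qed.

End Conv.

Lemma exists_max (I : finType) (i0 : I) (f : I -> R) : exists i, forall j, f j <= f i.
Proof.
by case: (@arg_maxP _ _ I i0 predT f isT) => i _ H; exists i => j; apply: H.
Qed.

Lemma exists_small (I : finType) (P : I -> R -> Prop) :
  (forall i, exists2 e, 0 < e & forall e', 0 < e' -> e' <= e -> P i e') ->
  exists2 e, 0 < e & forall i, P i e.
Proof.
move=> H.
have HH : forall i, exists e : R, 0 < e /\ forall e', 0 < e' -> e' <= e -> P i e'.
  by move=> i; case: (H i) => e e0 He; exists e.
have [E HE] := choice HH.
have [E0 EP] : (forall i, 0 < E i) /\ (forall i e', 0 < e' -> e' <= E i -> P i e').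
  by split => i; case: (HE i).
exists (\big[Order.min/1]_i E i).
  by elim/big_ind: _ => // x y x0 y0; rewrite lt_min x0 y0.
move=> i; apply: EP.
  by elim/big_ind: _ => // x y x0 y0; rewrite lt_min x0 y0.
rewrite (bigD1 i) //=; rewrite ge_min lexx //.
Qed.

Section FF.
Variables (d : nat) (p : seq 'rV[R]_d) (i00 : 'I_(size p)).
Local Notation Z := (conv_hull p).
Local Notation N := (size p).
Local Notation face := (face p).

Lemma face_hmax u (k : 'I_N) : (forall j : 'I_N, dotv u p`_j <= dotv u p`_k) ->
  forall x, face u x -> dotv u x = dotv u p`_k.
Proof.
move=> Hk x /faceP[zx H]; apply/eqP; rewrite eq_le (H k) andbT.
exact: (conv_le zx Hk).
Qed.

Lemma face_of_face u u2 : exists u3, forall x,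
  face u3 x <-> (face u x /\ forall y, face u y -> dotv u2 y <= dotv u2 x).
Proof.
have [i1 Hi1] := exists_max i00 (fun j => dotv u p`_j).
set h := dotv u p`_i1.
case: (@arg_maxP _ _ 'I_N i1 [pred j : 'I_N | dotv u p`_j == h] (fun j => dotv u2 p`_j) (eqxx _)).
move=> i0 /= /eqP Pi0 Hi0.
set g := dotv u2 p`_i0.
have [e e0 He] : exists2 e, 0 < e & forall j : 'I_N, dotv u p`_j < h ->
    e * (dotv u2 p`_j - g) < h - dotv u p`_j.
  apply: (exists_small (P := fun (j : 'I_N) (e : R) => dotv u p`_j < h ->
    e * (dotv u2 p`_j - g) < h - dotv u p`_j)) => j.
  set D := dotv u2 p`_j - g.
  have [lt|ge] := ltrP (dotv u p`_j) h; last first.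
    by exists 1 => // e' _ _ /(le_lt_trans ge); rewrite ltxx.
  exists ((h - dotv u p`_j) / (`|D| + 1)).
    by apply: divr_gt0; [rewrite subr_gt0 | rewrite ltr_wpDl].
  move=> e' e'0 e'le _.
  have Dn : D <= `|D| by apply: ler_norm.
  have Dp : 0 < `|D| + 1 by rewrite ltr_wpDl.
  have : e' * (`|D| + 1) <= h - dotv u p`_j.
    by rewrite -ler_pdivlMr.
  nra.
exists (u + e *: u2) => x.
have key : forall j : 'I_N, dotv (u + e *: u2) p`_j <= h + e * g /\
    (dotv (u + e *: u2) p`_j = h + e * g -> dotv u p`_j = h /\ dotv u2 p`_j = g).
  move=> j; rewrite dotvDl dotvZl.
  have [Pj|Pj] := eqVneq (dotv u p`_j) h.
    have := Hi0 j (introT eqP Pj); rewrite -/g Pj => le.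
    split; first by nra.
    by move=> E; split => //; nra.
  have lt : dotv u p`_j < h by rewrite lt_neqAle Pj Hi1.
  have := He j lt; move=> H; split; first nra.
  move=> E; exfalso; nra.
split.
- move=> fx; have [zx H3] := fx.
  have xm : dotv (u + e *: u2) x = h + e * g.
    apply/eqP; rewrite eq_le; apply/andP; split.
      by apply: (conv_le zx) => j; case: (key j).
    have := (proj2 ((faceP _ _ _).1 fx)) i0.
    by rewrite dotvDl dotvZl Pi0.
  have [c [c0 [c1 xe]]] := zx.
  have supp : forall j, 0 < c j -> dotv u p`_j = h /\ dotv u2 p`_j = g.
    move=> j cj; apply: (proj2 (key j)); apply/eqP; rewrite eq_le (proj1 (key j)).
    rewrite -xm.
    have : face (u + e *: u2) p`_j by apply: (face_supp c0 c1) => //; rewrite -xe.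
    by case/faceP => _ /(_ i0); rewrite xm dotvDl dotvZl Pi0.
  split.
    rewrite xe; apply: face_of_supp => // j /supp [uj _].
    by apply/faceP; split; [exact: conv_pt | move=> k; rewrite uj Hi1].
  move=> y fy; apply: (@le_trans _ _ g).
    have [zy _] := fy; have [c' [c'0 [c'1 ye]]] := zy.
    rewrite ye; apply: supp_le => // k ck.
    have : face u p`_k by apply: (face_supp c'0 c'1) => //; rewrite -ye.
    move=> fk; have := face_hmax Hi1 fk; rewrite -/h => ek.
    by apply: Hi0; rewrite /= ek.
  by rewrite xe; apply: supp_ge => // j /supp[_ ->].
- case=> fx Hx; apply/faceP; split; first exact: face_sub fx.
  have fi0 : face u p`_i0.
    by apply/faceP; split; [exact: conv_pt | move=> k; rewrite Pi0 Hi1].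
  have := Hx _ fi0; rewrite -/g => gx.
  have ux := face_hmax Hi1 fx; rewrite -/h in ux.
  move=> j; apply: le_trans (proj1 (key j)) _.
  rewrite dotvDl dotvZl ux; nra.
Qed.

Lemma face_eq u a b : face u a -> face u b -> dotv u a = dotv u b.
Proof.
move=> fa fb; apply/eqP; rewrite eq_le; apply/andP; split.
  by case: fb => _; apply; case: fa.
by case: fa => _; apply; case: fb.
Qed.

Lemma face_lc' u l (Q : seq 'rV[R]_d) : size l = size Q -> (forall q, q \in Q -> face u q) ->
  all (fun a => 0 <= a) l -> 0 < \sum_(a <- l) a ->
  face u ((\sum_(a <- l) a)^-1 *: lc l Q).
Proof.
elim: l Q => [|a l IH] [|q Q] //=; rewrite ?big_nil ?ltxx // big_cons.
case=> slQ HQ /andP[a0 l0] sp.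
have sl0 : 0 <= \sum_(b <- l) b.
  by rewrite big_seq_cond; apply: sumr_ge0 => y /andP[/(allP l0)].
have fq : face u q by apply: HQ; rewrite mem_head.
have [S0|Sp] := eqVneq (\sum_(b <- l) b) 0.
  rewrite S0 addr0 lc_zero // addr0 scalerA mulVf ?scale1r //.
  by move: sp; rewrite S0 addr0 => /gt_eqF ->.
have Sp' : 0 < \sum_(b <- l) b by rewrite lt_neqAle eq_sym Sp.
have fz := IH Q slQ (fun q' q'Q => HQ q' (@mem_behead _ (q :: Q) _ q'Q)) l0 Sp'.
set S := \sum_(b <- l) b in fz Sp Sp' sl0 sp *; clearbody S.
have := face_convex fq fz (t := a / (a + S)).
rewrite divr_ge0 ?ler_pdivrMr //=; last by lra.
have -> : a <= 1 * (a + S) by lra.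
move/(_ isT).
suff -> : a / (a + S) *: q + (1 - a / (a + S)) *: (S^-1 *: lc l Q) =
  (a + S)^-1 *: (a *: q + lc l Q) by [].
apply/rowP => i; rewrite !mxE; field; by rewrite !gt_eqF.
Qed.

Lemma face_lc u l (Q : seq 'rV[R]_d) : size l = size Q -> (forall q, q \in Q -> face u q) ->
  all (fun a => 0 <= a) l -> \sum_(a <- l) a = 1 -> face u (lc l Q).
Proof.
move=> slQ HQ l0 s1; have := face_lc' slQ HQ l0; rewrite s1 invr1 scale1r; apply.
exact: ltr01.
Qed.

Lemma face_center u c x : (forall y, face u y <-> face u (2%:R *: c - y)) ->
  face u x -> face u c.
Proof.
move=> Hc fx; have f2 := (Hc x).1 fx.
have := face_convex fx f2 (t := 2^-1); rewrite invr_ge0 ler0n /= invf_le1 ?ler1n //.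
move/(_ isT).
suff -> : 2^-1 *: x + (1 - 2^-1) *: (2%:R *: c - x) = c by [].
by apply/rowP => i; rewrite !mxE; field.
Qed.

End FF.

Section Core.
Variables (d : nat) (p : seq 'rV[R]_d) (i00 : 'I_(size p)).
Local Notation Z := (conv_hull p).
Local Notation N := (size p).
Local Notation face := (face p).
Hypothesis hsym : forall u, centrally_symmetric (face u).

Definition meas u := #|[set i : 'I_N | `[< face u p`_i >]]%SET|.

Lemma coreC k : forall u, (meas u < k)%N -> forall x, face u x ->
  exists v, is_vertex Z v /\ face u v /\ face u (2%:R *: x - v).
Proof.
elim: k => [//|k IH] u mu x fx.
have [c Hc] := hsym u.
have fc : face u c by apply: face_center Hc fx.
case: (pselect (exists y0, face u y0 /\ y0 <> c)) => [[y0 [fy0 ny0]]|nex]; last first.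
  have onlyc : forall z, face u z -> z = c.
    by move=> z fz; apply: contrapT => nz; apply: nex; exists z.
  have xc := onlyc _ fx.
  exists c; split.
    exists u; apply/seteqP; split => z /=; first by move=> ->.
    exact: onlyc.
  split => //; suff -> : 2%:R *: x - c = c by [].
  by rewrite xc; apply/rowP => i; rewrite !mxE; ring.
have [y1 [s [fy1 [ny1 [s01 xe]]]]] : exists y1 s, face u y1 /\ y1 <> c /\
    0 <= s <= 1 /\ x = c + s *: (y1 - c).
  have [xc|xc] := eqVneq x c.
    exists y0, 0; split => //; split => //; rewrite lexx ler01; split => //.
    by rewrite scale0r addr0.
  exists x, 1; split => //; split; first exact/eqP.
  by rewrite lexx ler01; split => //; rewrite scale1r addrC subrK.
set d0 := y1 - c.
have d0n : d0 != 0 by rewrite subr_eq0; apply/eqP.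
have dd : 0 < dotv d0 d0.
  by rewrite lt_neqAle dotv_ge0 andbT eq_sym; apply/eqP => /dotv_eq0; apply/eqP.
have ud0 : dotv u d0 = 0 by rewrite dotvBr (face_eq fy1 fc) subrr.
set S := [set t : R | face u (c + t *: d0)].
have S1 : S 1 by rewrite /S /= scale1r addrC subrK.
have [i2 Hi2] := exists_max i00 (fun j => dotv d0 p`_j).
have ubS : ubound S ((dotv d0 p`_i2 - dotv d0 c) / dotv d0 d0).
  move=> t St; rewrite ler_pdivlMr //.
  have := conv_le (face_sub St) Hi2; rewrite dotvDr dotvZr; lra.
have hsS : has_sup S by split; [exists 1 | exists ((dotv d0 p`_i2 - dotv d0 c) / dotv d0 d0)].
set T := sup S.
have T1 : 1 <= T by apply: sup_upper_bound.
have fT : face u (c + T *: d0).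
  apply/faceP; split; last first.
    by move=> i; rewrite dotvDr dotvZr ud0 mulr0 addr0; case/faceP: fc => _; apply.
  apply: contrapT => /conv_sep [w [M [HM MT]]].
  have Sb : forall t, S t -> dotv w c + t * dotv w d0 <= M.
    by move=> t St; have := conv_le (face_sub St) HM; rewrite dotvDr dotvZr.
  move: MT; rewrite dotvDr dotvZr.
  have [b0|b0] := lerP (dotv w d0) 0.
    have := Sb 1 S1; nra.
  have : T <= (M - dotv w c) / dotv w d0.
    apply: ge_sup; first by exists 1.
    by move=> t /Sb St; rewrite ler_pdivlMr //; lra.
  rewrite ler_pdivlMr //; lra.
set y := c + T *: d0.
set Q := seq.filter (fun q => `[< face u q >]) p.
have HQ : forall q, q \in Q -> face u q by move=> q; rewrite mem_filter => /andP[/asboolP].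
case: (farkas (map (fun q => q - y) Q) (y - c)) => [[l [sl [l0 e]]]|[u2 [Hu2 u2pos]]].
  exfalso; rewrite size_map in sl; rewrite lc_subconst // in e.
  set L := \sum_(a <- l) a in e.
  have L0 : 0 <= L by rewrite /L big_seq_cond; apply: sumr_ge0 => z /andP[/(allP l0)].
  have [Le|Lp] := eqVneq L 0.
    have := lc_zero Q l0 Le; move: e; rewrite Le scale0r subr0 => <-.
    rewrite /y addrC addKr => /eqP; rewrite scaler_eq0 (negbTE d0n) orbF => /eqP T0.
    by move: T1; rewrite T0 ler10.
  have Lp' : 0 < L by rewrite lt_neqAle eq_sym Lp.
  have fz : face u (lc (map (fun a : R => L^-1 * a) l) Q).
    apply: face_lc => //; first by rewrite size_map.
      by apply/allP => b /mapP[b' /(allP l0) b'0 ->]; apply: mulr_ge0 => //; rewrite invr_ge0 ltW.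
    by rewrite big_map -mulr_sumr -/L mulVf.
  rewrite lc_scale in fz.
  have : S (T + T / L).
    rewrite /S /=; suff <- : L^-1 *: lc l Q = c + (T + T / L) *: d0 by [].
    have -> : lc l Q = y - c + L *: y by rewrite e subrK.
    rewrite /y; apply/rowP => i; rewrite !mxE; field; exact: Lp.
  move/(ub_le_sup _); rewrite -/T => H.
  have : T + T / L <= T by apply: H; exists ((dotv d0 p`_i2 - dotv d0 c) / dotv d0 d0).
  have : 0 < T / L by apply: divr_gt0 => //; lra.
  lra.
have [u3 Hu3] := face_of_face i00 u u2.
have fyG : face u3 y.
  apply/Hu3; split => // y' fy'.
  have [c' [c'0 [c'1 ye]]] := face_sub fy'.
  rewrite ye; apply: supp_le => // i ci.
  have fi : face u p`_i by apply: (face_supp c'0 c'1) => //; rewrite -ye.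
  have : p`_i - y \in map (fun q => q - y) Q.
    by apply: map_f; rewrite mem_filter mem_nth // andbT; apply/asboolP.
  by move/Hu2; rewrite dotvBr; lra.
have ncG : ~ face u3 c.
  move/Hu3 => [_ /(_ y fT)]; move: u2pos; rewrite dotvBr; lra.
have mlt : (meas u3 < meas u)%N.
  apply: proper_card; apply/properP; split.
    apply/fintype.subsetP => i; rewrite !inE => fi3; exact: (proj1 ((Hu3 _).1 fi3)).
  case: (pselect (exists i : 'I_N, face u p`_i /\ ~ face u3 p`_i)) => [[i [h1 h2]]|nh].
    exists i; rewrite !inE; first exact: h1. by apply/asboolPn.
  exfalso; apply: ncG.
  have [cc [cc0 [cc1 ce]]] := face_sub fc.
  rewrite ce; apply: face_of_supp => // i ci.
  have fi : face u p`_i by apply: (face_supp cc0 cc1) => //; rewrite -ce.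
  by apply: contrapT => nfi; apply: nh; exists i.
have mk : (meas u3 < k)%N by apply: leq_trans mlt _.
have [c3 Hc3] := hsym u3.
have fc3 : face u3 c3 by apply: face_center Hc3 fyG.
have T0 : 0 < T by lra.
set rho := s / T.
have rho01 : 0 <= rho <= 1.
  apply/andP; split; first by apply: divr_ge0; lra.
  by rewrite ler_pdivrMr //; lra.
have fx' : face u3 (rho *: y + (1 - rho) *: c3) by apply: face_convex.
have [v [vv [fv fv2]]] := IH u3 mk _ fx'.
exists v; split => //; split; first by case/Hu3: fv.
set gg := 2%:R *: (rho *: y + (1 - rho) *: c3) - v in fv2.
have fgg : face u gg by case/Hu3: fv2.
have fr : face u (2%:R *: c - (2%:R *: c3 - gg)).
  exact: ((Hc _).1 (proj1 ((Hu3 _).1 ((Hc3 gg).1 fv2)))).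
move/andP: rho01 => [r0 r1].
have := face_convex fr fgg (t := 1 - rho).
have -> : 0 <= 1 - rho <= 1 by apply/andP; split; lra.
move/(_ isT).
suff -> : (1 - rho) *: (2%:R *: c - (2%:R *: c3 - gg)) + (1 - (1 - rho)) *: gg =
  2%:R *: x - v by [].
rewrite /gg /rho /y xe -/d0; apply/rowP => i; rewrite !mxE; field; by rewrite gt_eqF.
Qed.

End Core.
End Lin.



Section Cov.
Variables (R : realType) (d : nat) (p : seq 'rV[R]_d) (i00 : 'I_(size p)).
Local Notation Z := (conv_hull p).
Local Notation N := (size p).
Local Notation face := (face p).
Hypothesis hsym : forall u, centrally_symmetric (face u).

Lemma face0 x : face 0 x <-> Z x.
Proof. by split=> [[]//|zx]; split => // y _; rewrite !dotv0l. Qed.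

Lemma vertex_exists : exists v, is_vertex Z v.
Proof.
have := @coreC R d p i00 hsym (meas p 0).+1 0 (ltnSn _) p`_i00.
case; first by apply/face0; apply: conv_pt.
by move=> v [vv _]; exists v.
Qed.

Lemma covering lam1 lam2 x1 x2 w : 0 < lam1 -> lam1 <= lam2 ->
  homothet Z lam1 x1 w -> homothet Z lam2 x2 w ->
  exists v, is_vertex Z v /\ homothet Z lam2 x2 (lam1 *: v + x1).
Proof.
move=> l1 l12 [a za ea] [b zb eb].
have l2 : 0 < lam2 by lra.
have [c Hc] := hsym 0.
have Hc' : forall y, Z y -> Z (2%:R *: c - y).
  by move=> y /face0 /(Hc y).1 /face0.
set mu := lam2 / lam1.
have mu1 : 1 <= mu by rewrite /mu ler_pdivlMr // mul1r.
have zx : Z ((1 + mu)^-1 *: a + (1 - (1 + mu)^-1) *: (2%:R *: c - b)).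
  apply: conv_convex => //; first exact: Hc'.
  rewrite invr_ge0 invf_le1; last by lra.
  by apply/andP; split; lra.
set x := _ *: a + _ in zx.
have := @coreC R d p i00 hsym (meas p 0).+1 0 (ltnSn _) x (proj2 (face0 _) zx).
move=> [v [vv [_ /face0 zr]]].
exists v; split => //.
set r := 2%:R *: x - v in zr.
have zz : Z ((1 - mu^-1) *: (2%:R *: c - x) + (1 - (1 - mu^-1)) *: (2%:R *: c - r)).
  apply: conv_convex; [exact: Hc' | exact: Hc' |].
  have : 0 < mu^-1 <= 1 by rewrite invr_gt0 invf_le1; lra.
  by move/andP=> [h1 h2]; apply/andP; split; lra.
exists ((1 - mu^-1) *: (2%:R *: c - x) + (1 - (1 - mu^-1)) *: (2%:R *: c - r)) => //.
have ex1 : x1 = lam2 *: b + x2 - lam1 *: a by rewrite eb -ea addrAC subrr add0r.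
rewrite ex1 /r /x /mu; apply/rowP => i; rewrite !mxE.
field.
by rewrite !gt_eqF //=; lra.
Qed.

End Cov.



Lemma count_le_in (T : eqType) (a b : pred T) (S : seq T) :
  (forall s, s \in S -> a s -> b s) -> (count a S <= count b S)%N.
Proof.
elim: S => //= s S IH H.
rewrite leq_add //; last by apply: IH => t tS; apply: H; rewrite in_cons tS orbT.
by case as_: (a s) => //; rewrite (H s (mem_head _ _) as_).
Qed.

Section MinHom.
Variables (R : realType) (d : nat) (p : seq 'rV[R]_d) (i00 : 'I_(size p)).
Local Notation Z := (conv_hull p).
Local Notation N := (size p).
Variable c : 'rV[R]_d.
Hypothesis zc : Z c.

Definition cnt (S : seq 'rV[R]_d) lam x := count (fun s => s \in homothet Z lam x) S.

Lemma hom_mono lam lam' y s : 0 <= lam -> lam <= lam' -> 0 < lam' ->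
  homothet Z lam (y - lam *: c) s -> homothet Z lam' (y - lam' *: c) s.
Proof.
move=> l0 ll l'0 [z zz <-].
exists ((lam / lam') *: z + (1 - lam / lam') *: c).
  apply: conv_convex => //; apply/andP; split.
    by apply: divr_ge0; lra.
  by rewrite ler_pdivrMr // mul1r.
by apply/rowP => i; rewrite !mxE; field; rewrite gt_eqF.
Qed.

Lemma hom_le lam x s w M : 0 <= lam -> homothet Z lam x s ->
  (forall i : 'I_N, dotv w p`_i <= M) -> dotv w (s - x) <= lam * M.
Proof.
move=> l0 [z zz <-] H; rewrite addrK dotvZr; apply: ler_wpM2l => //.
exact: conv_le zz H.
Qed.

Lemma hom_sep lam x s : 0 <= lam -> ~ homothet Z lam x s ->
  exists w M, (forall i : 'I_N, dotv w p`_i <= M) /\ lam * M < dotv w (s - x).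
Proof.
move=> l0 ns; have [l00|lp] := eqVneq lam 0.
  have sx : s - x != 0.
    apply/eqP => /eqP; rewrite subr_eq0 => /eqP sx; apply: ns.
    by exists p`_i00; [exact: conv_pt | rewrite l00 scale0r add0r].
  have [i2 Hi2] := exists_max i00 (fun j => dotv (s - x) p`_j).
  exists (s - x), (dotv (s - x) p`_i2); split => //.
  rewrite l00 mul0r lt_neqAle dotv_ge0 andbT eq_sym.
  by apply/eqP => /dotv_eq0; apply/eqP.
have lp' : 0 < lam by rewrite lt_neqAle eq_sym lp.
have nz : ~ Z (lam^-1 *: (s - x)).
  move=> zz; apply: ns; exists (lam^-1 *: (s - x)) => //.
  by rewrite scalerA mulfV // scale1r subrK.
have [w [M [HM HMs]]] := conv_sep nz.
exists w, M; split => //; move: HMs; rewrite dotvZr => h.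
have e1 : lam * lam^-1 = 1 by rewrite mulfV.
have := ltr_pM2l lp' M (lam^-1 * dotv w (s - x)); rewrite h mulrA e1 mul1r.
by move=> /esym.
Qed.

Lemma dot_bound w (v : 'rV[R]_d) e : (forall i, `|v 0 i| <= e) ->
  `|dotv w v| <= e * \sum_i `|w 0 i|.
Proof.
move=> H; rewrite /dotv mulr_sumr; apply: le_trans (ler_norm_sum _ _ _) _.
apply: ler_sum => i _; rewrite normrM mulrC; apply: ler_wpM2r => //.
Qed.


Lemma conv_coord z i : Z z -> `|z 0 i| <= \sum_(j < N) `|p`_j 0 i|.
Proof.
move=> [w [w0 [w1 ->]]]; rewrite summxE; apply: le_trans (ler_norm_sum _ _ _) _.
apply: ler_sum => j _; rewrite mxE normrM (ger0_norm (w0 j)).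
have wj1 : w j <= 1.
  rewrite -w1 (bigD1 j) //= lerDl; apply: sumr_ge0 => k _; exact: w0.
by rewrite -[X in _ <= X]mul1r; apply: ler_wpM2r.
Qed.

Lemma mem_sum_norm (S : seq 'rV[R]_d) s i : s \in S ->
  `|s 0 i| <= \sum_(t <- S) `|t 0 i|.
Proof.
move=> sS; rewrite (big_rem _ sS) /= lerDl.
by rewrite big_seq_cond; apply: sumr_ge0.
Qed.

Lemma minhom (S : seq 'rV[R]_d) (th : R) : uniq S -> 1 < th ->
  (exists lam x, 0 < lam /\ th <= (cnt S lam x)%:R) ->
  exists lam x, [/\ 0 < lam, th <= (cnt S lam x)%:R &
    forall lam' x', 0 < lam' -> th <= (cnt S lam' x')%:R -> lam <= lam'].
Proof.
move=> uS th1 [la [xa [la0 ha]]].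
pose L := [set lam | 0 < lam /\ exists x, th <= (cnt S lam x)%:R].
have L0 : L la by split => //; exists xa.
have Llb : lbound L 0 by move=> l [l0 _]; exact: ltW.
set l0 := inf L.
have l0ge : 0 <= l0 by apply: lb_le_inf => //; exists la.
have lowb : forall lam x, 0 < lam -> th <= (cnt S lam x)%:R -> l0 <= lam.
  move=> lam x lp h; apply: ge_inf; first by exists 0.
  by split => //; exists x.
pose X e := [set y | th <= (cnt S (l0 + e) (y - (l0 + e) *: c))%:R].
have cnt_mono : forall lam lam' y, 0 <= lam -> lam <= lam' -> 0 < lam' ->
    (cnt S lam (y - lam *: c) <= cnt S lam' (y - lam' *: c))%N.
  move=> lam lam' y h1 h2 h3; apply: sub_count => s /=.
  by move=> /set_mem hs; apply: mem_set; apply: hom_mono hs.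
have Xne : forall e, 0 < e -> X e !=set0.
  move=> e e0; have [l' [l'0 [x' hx']] l'lt] : exists2 l', L l' & l' < l0 + e.
    by apply: inf_lt; [exists la | lra].
  exists (x' + l' *: c); rewrite /X /=; apply: le_trans hx' _.
  rewrite ler_nat; have := cnt_mono l' (l0 + e) (x' + l' *: c).
  by rewrite addrK; apply; lra.
have Xmono : forall e e', 0 < e' -> e' <= e -> X e' `<=` X e.
  move=> e e' e'0 ee y; rewrite /X /= => h; apply: le_trans h _.
  by rewrite ler_nat; apply: cnt_mono; lra.
pose K i := \sum_(t <- S) `|t 0 i| + (l0 + 1) * (\sum_(j < N) `|p`_j 0 i| + `|c 0 i|).
pose B := [set y : 'rV[R]_d | forall i, `[- K i, K i]%classic (y 0 i)].
have XB : X 1 `<=` B.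
  move=> y; rewrite /X /= => hy i.
  have : has (fun s => s \in homothet Z (l0 + 1) (y - (l0 + 1) *: c)) S.
    by rewrite has_count; rewrite -(ltr_nat R); apply: lt_le_trans hy; lra.
  case/hasP => s sS /set_mem [z zz ez].
  have ye : y 0 i = s 0 i - (l0 + 1) * z 0 i + (l0 + 1) * c 0 i.
    by rewrite -ez !mxE; ring.
  rewrite /= in_itv /= -ler_norml ye.
  have h1 := mem_sum_norm i sS; have h2 := conv_coord i zz.
  have h3 : 0 <= l0 + 1 by lra.
  rewrite /K; apply: le_trans (ler_normD _ _) _; apply: le_trans (lerD (ler_normB _ _) (lexx _)) _.
  rewrite !normrM (ger0_norm h3) -addrA lerD // mulrDr lerD //.
  by apply: ler_wpM2l.
have cB : compact B.
  by apply: (@rV_compact _ _ (fun i => `[- K i, K i]%classic)) => i; apply: segment_compact.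
pose F := filter_from [set e : R | 0 < e] X.
have FF : ProperFilter F.
  apply: filter_from_proper; last by move=> e /Xne.
  apply: filter_from_filter; first by exists 1; rewrite /= ltr01.
  move=> e1 e2 /= e10 e20; exists (Order.min e1 e2); first by rewrite /= lt_min e10 e20.
  move=> y hy; split.
    by apply: Xmono hy; [rewrite lt_min e10 | rewrite ge_min lexx].
  by apply: Xmono hy; [rewrite lt_min e10 | rewrite ge_min lexx orbT].
have FB : F B by exists 1 => //=; exact: ltr01.
have [y0 [By0 cly0]] := cB F FF FB.
have heavy0 : th <= (cnt S l0 (y0 - l0 *: c))%:R.
  apply: contrapT => /negP; rewrite -ltNge => hlt.
  pose P (j : 'I_(size S)) (e : R) := ~ homothet Z l0 (y0 - l0 *: c) S`_j ->
    forall y : 'rV[R]_d, (forall i, `|y0 0 i - y 0 i| < e) ->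
    ~ homothet Z (l0 + e) (y - (l0 + e) *: c) S`_j.
  have [e e0 He] : exists2 e, 0 < e & forall j, P j e.
    apply: exists_small => j.
    case: (pselect (homothet Z l0 (y0 - l0 *: c) S`_j)) => [hj|nj].
      by exists 1 => // e' _ _; rewrite /P.
    have [w [M [HM HMs]]] := hom_sep l0ge nj.
    set g0 := dotv w (S`_j - (y0 - l0 *: c)) - l0 * M.
    have g0p : 0 < g0 by rewrite /g0; lra.
    set Kw := \sum_i `|w 0 i| + `|dotv w c - M| + 1.
    have Kw0 : 0 < Kw.
      rewrite /Kw; have : 0 <= \sum_i `|w 0 i| by apply: sumr_ge0.
      have := normr_ge0 (dotv w c - M); lra.
    exists (g0 / Kw); first exact: divr_gt0.
    move=> e' e'0 e'le _ y hy hin.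
    have := hom_le (w := w) (M := M) _ hin HM.
    have le1 : `|dotv w (y0 - y)| <= e' * \sum_i `|w 0 i|.
      by apply: dot_bound => i; rewrite !mxE; apply: ltW.
    have ee : dotv w (S`_j - (y - (l0 + e') *: c)) =
      g0 + l0 * M + dotv w (y0 - y) + e' * dotv w c.
      by rewrite /g0 !dotvBr !dotvZr; ring.
    rewrite ee => /(_ _); have h0 : 0 <= l0 + e' by lra.
    move=> /(_ h0) hh.
    have hD : e' * Kw <= g0 by rewrite -ler_pdivlMr.
    have hC := ler_norm (M - dotv w c); rewrite distrC in hC.
    move: le1; rewrite ler_norml => /andP[hA hB].
    have sw0 : 0 <= \sum_i `|w 0 i| by apply: sumr_ge0.
    move: hD hC hA hB hh sw0; rewrite /Kw.
    move: (\sum_i `|w 0 i|) (`|dotv w c - M|) (dotv w (y0 - y)) => sw nm dy.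
    move=> hD hC hA hB hh sw0; nra.
  have FXe : F (X e) by exists e.
  have [y [Xy by0]] := cly0 _ _ FXe (nbhsx_ballx y0 e e0).
  have yb : forall i, `|y0 0 i - y 0 i| < e by move=> i; case: by0 => _ /(_ 0 i).
  move: Xy; rewrite /X /= => hy.
  have : (cnt S (l0 + e) (y - (l0 + e) *: c) <= cnt S l0 (y0 - l0 *: c))%N.
    apply: count_le_in => s sS /set_mem hs; apply: mem_set.
    apply: contrapT => ns; have := He (Ordinal (introT idP (etrans (index_mem s S) sS) : (index s S < size S)%N)).
    rewrite /P /= nth_index // => /(_ ns y yb); exact.
  rewrite -(ler_nat R) => h; lra.
have l0p : 0 < l0.
  rewrite lt_neqAle l0ge andbT; apply/eqP => l00; move: heavy0.
  rewrite -l00 scale0r subr0 /cnt.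
  have : (count (fun s => s \in homothet Z 0 y0) S <= count (pred1 y0) S)%N.
    apply: sub_count => s /= /set_mem [z _]; rewrite scale0r add0r => ->; exact: eqxx.
  rewrite -(ler_nat R) (count_uniq_mem _ uS) => h1 h2.
  have : ((y0 \in S) : nat)%:R <= 1 :> R by case: (y0 \in S).
  lra.
exists l0, (y0 - l0 *: c); split => //.
Qed.

End MinHom.



Section Greedy.
Variables (R : realType) (d : nat) (p : seq 'rV[R]_d) (i00 : 'I_(size p)).
Local Notation Z := (conv_hull p).
Local Notation N := (size p).
Hypothesis hsym : forall u, centrally_symmetric (face p u).
Variable V : seq 'rV[R]_d.
Hypothesis hV : forall x, x \in V <-> is_vertex Z x.

Lemma center_in : exists c, Z c.
Proof.
have [c Hc] := hsym 0.
exists c; apply/(face0 p); apply: (face_center Hc); apply/(face0 p); exact: conv_pt.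
Qed.

Lemma greedy (th : R) : 1 < th -> forall n (S : seq 'rV[R]_d), uniq S -> (size S <= n)%N ->
  exists W : seq 'rV[R]_d, (size W)%:R * th <= (size V * size S)%:R /\
  forall lam x, 0 < lam -> th <= (cnt p S lam x)%:R -> exists2 w, w \in W & homothet Z lam x w.
Proof.
move=> th1; have [c zc] := center_in.
elim=> [|n IH] S uS sS.
  exists [::]; split; first by rewrite /= mul0r ler0n.
  move: sS; rewrite leqn0 size_eq0 => /eqP -> lam x _; rewrite /cnt /=; lra.
case: (pselect (exists lam x, 0 < lam /\ th <= (cnt p S lam x)%:R)) => [hex|nex]; last first.
  exists [::]; split; first by rewrite /= mul0r ler0n.
  by move=> lam x l0 h; exfalso; apply: nex; exists lam, x.
have [ls [xs [ls0 hs mins]]] := minhom i00 zc uS th1 hex.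
pose S' := [seq s <- S | s \notin homothet Z ls xs].
have sS' : (size S' + cnt p S ls xs)%N = size S.
  by rewrite /S' size_filter /cnt addnC count_predC.
have cpos : (0 < cnt p S ls xs)%N by rewrite -(ltr_nat R); lra.
have sS'n : (size S' <= n)%N.
  by rewrite -ltnS; apply: leq_trans sS; rewrite -sS' -addn1 leq_add2l.
have [W' [hW' hitW']] := IH S' (filter_uniq _ uS) sS'n.
exists ([seq ls *: v + xs | v <- V] ++ W'); split.
  rewrite size_cat size_map -sS' !natrM !natrD mulrDl.
  move: hW' hs; rewrite natrM.
  have := ler0n R (size V); move: (size V)%:R (size W')%:R (size S')%:R (cnt p S ls xs)%:R.
  move=> a b e f a0 h1 h2; nra.
move=> lam x l0 h.
case: (pselect (exists s, s \in S /\ homothet Z lam x s /\ homothet Z ls xs s)) => [[s [sS0 [h1 h2]]]|ns].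
  have lsl := mins lam x l0 h.
  have [v [vv hv]] := covering i00 hsym ls0 lsl h2 h1.
  exists (ls *: v + xs) => //; rewrite mem_cat; apply/orP; left.
  by apply: map_f; apply/hV.
have [w wW hw] : exists2 w, w \in W' & homothet Z lam x w.
  apply: hitW' => //; apply: le_trans h _; rewrite ler_nat /cnt /S' count_filter.
  apply: count_le_in => s sS0 hs0; rewrite /= hs0 /=; apply/negP => /set_mem hz.
  by apply: ns; exists s; split => //; split => //; apply: set_mem.
by exists w => //; rewrite mem_cat wW orbT.
Qed.

End Greedy.

Theorem mainTheorem20 (R : realType) (d : nat) (Z : set 'rV[R]_d)
  (V : seq 'rV[R]_d) :
  is_zonotope Z ->
  uniq V -> (forall x, x \in V <-> is_vertex Z x) ->
  forall (S : seq 'rV[R]_d) (eps : R),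
    uniq S -> S != [::] -> 0 < eps ->
    exists W : seq 'rV[R]_d,
      (size W)%:R <= (size V)%:R / eps /\
      forall (lam : R) (x : 'rV[R]_d), 0 < lam ->
        eps * (size S)%:R <= (count (fun s => s \in homothet Z lam x) S)%:R ->
        exists2 w, w \in W & homothet Z lam x w.
Proof.
move=> [[p [pn ZE]] _ Hfaces] uV hV S eps uS Sn eps0.
subst Z.
have i00 : 'I_(size p) by exists 0%N; rewrite lt0n size_eq0.
have hsym : forall u, centrally_symmetric (face p u).
  by move=> u; apply: Hfaces; exists u.
have sS0 : (0 < size S)%N by rewrite lt0n size_eq0.
have sSR : 0 < (size S)%:R :> R by rewrite ltr0n.
case: (lerP (eps * (size S)%:R) 1) => [small|big].
  exists S; split.
    have [v vv] := vertex_exists i00 hsym.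
    have : (0 < size V)%N.
      rewrite lt0n size_eq0; apply/negP => /eqP V0; move: (proj2 (hV v) vv); by rewrite V0.
    rewrite -(ltr_nat R) => sV.
    rewrite ler_pdivlMr //.
    have : 1 <= (size V)%:R :> R by rewrite ler1n -(ltr_nat R).
    nra.
  move=> lam x l0 h.
  have : has (fun s => s \in homothet (conv_hull p) lam x) S.
    by rewrite has_count -(ltr_nat R); apply: lt_le_trans h; apply: mulr_gt0.
  by case/hasP => s sS hs; exists s => //; apply: set_mem.
have [W [hW hit]] := greedy i00 hsym hV big uS (leqnn _).
exists W; split; last exact: hit.
rewrite ler_pdivlMr // natrM in hW *.
move: hW; rewrite mulrA => hW.
have := ler_pM2r sSR ((size W)%:R * eps) (size V)%:R.
by move=> <-.
Qed.
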